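(* Let $K$ be a field, $V$ a finite-dimensional $K$-vector space, $W$ a $K$-subspace of $V$, and $U$ a complement of $W$ in $V$, so $V=W\oplus U$; for $u\in U$ put $W_u=W+u$. Let $\vec{v}=(v_u)_{u\in U}$ be a family of vectors in $V$ and $\vec{\varphi}=(\varphi_u)_{u\in U}$ a family of $K$-endomorphisms of $V$ with $\varphi_u(W)\subseteq W$ for all $u$. Let $f=f_{\vec{\varphi},\vec{v}}:V\to V$ be defined by $f(x)=\varphi_u(x)+v_u$ for $x\in W_u$, and let $g=g_{\vec{\varphi},\vec{v}}:U\to U$ be the unique function with $f(W_u)\subseteq W_{g(u)}$ for all $u\in U$. Then: (1) $f$ is a permutation of $V$ if and only if for every $u\in U$ the restriction of $\varphi_u$ to $W$ is an automorphism of $W$ and $g$ is a permutation of $U$. (2) $f$ is a complete mapping of $V$ if and only if for every $u\in U$ the restriction of $\varphi_u$ to $W$ is a complete automorphism of $W$ (i.e., both $\varphi_u|_W$ and $\varphi_u|_W+\operatorname{id}_W$ are automorphisms of $W$) and $g$ is a complete mapping of $U$.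
   Context: A complete mapping of an additive group $G$ is a permutation $h$ of $G$ such that $x\mapsto h(x)+x$ is also a permutation of $G$. *)

(* Defs.v *)
From HB Require Import structures.
From mathcomp Require Import all_boot all_order all_algebra.
Set Implicit Arguments. Unset Strict Implicit. Unset Printing Implicit Defensive.
Import GRing.Theory.
Local Open Scope ring_scope.

Definition bij_on (T : eqType) (A : pred T) (h : T -> T) : Prop :=
  [/\ {in A, forall x, h x \in A}, {in A &, injective h}
    & {in A, forall y, exists2 x, x \in A & h x = y}].

Definition complete_on (T : zmodType) (A : pred T) (h : T -> T) : Prop :=
  bij_on A h /\ bij_on A (fun x => h x + x).

Section FG.
Variables (K : fieldType) (V : vectType K) (W U : {vspace V}).
Variables (phi : V -> 'End(V)) (v : V -> V).

(* the U-component of x, i.e. the unique u in U with x \in W + u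
   (projection onto U along W; valid as V = W (+) U) *)
Definition ucomp (x : V) : V := daddv_pi U W x.

Definition f_fam (x : V) : V := phi (ucomp x) x + v (ucomp x).

(* g : U -> U with f(W_u) \subseteq W_{g u}: g u is the U-component of f u *)
Definition g_fam (u : V) : V := ucomp (f_fam u).
End FG.

(* Main.v *)
Require Import Defs.
From HB Require Import structures.
From mathcomp Require Import all_boot all_order all_algebra.
Import GRing.Theory.
Local Open Scope ring_scope.

Section Core.
Variables (K : fieldType) (V : vectType K) (W U : {vspace V}).
Hypothesis hcap : (W :&: U = 0)%VS.
Hypothesis hsum : (W + U = fullv)%VS.

Let hcapUW : (U :&: W = 0)%VS. Proof. by rewrite capvC. Qed.

Lemma uc_in x : ucomp W U x \in U. Proof. exact: memv_pi. Qed.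

Lemma uc_rest x : x - ucomp W U x \in W.
Proof.
have Hx : x \in (U + W)%VS by rewrite addvC hsum memvf.
have := daddv_pi_add hcapUW Hx.
rewrite /ucomp => E. by rewrite -{1}E [_ + daddv_pi W U x]addrC addrK memv_pi.
Qed.

Lemma uc_U u : u \in U -> ucomp W U u = u.
Proof. by move=> Hu; rewrite /ucomp daddv_pi_id. Qed.

Lemma uc_W w : w \in W -> ucomp W U w = 0.
Proof.
move=> Hw.
have Hx : w \in (U + W)%VS by rewrite addvC hsum memvf.
have := daddv_pi_add hcapUW Hx.
rewrite (daddv_pi_id hcap Hw) -[X in _ = X]add0r. exact: addIr.
Qed.

Lemma uc_WU w u : w \in W -> u \in U -> ucomp W U (w + u) = u.
Proof. move=> Hw Hu; have := uc_W _ Hw; have := uc_U _ Hu; rewrite /ucomp linearD /= => -> ->; exact: add0r. Qed.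

Lemma uc0_W z : ucomp W U z = 0 -> z \in W.
Proof. by move=> H; have := uc_rest z; rewrite H subr0. Qed.

Lemma inj_surj (h : 'End(V)) :
  (forall w, w \in W -> h w \in W) -> {in W &, injective h} ->
  forall y, y \in W -> exists2 x, x \in W & h x = y.
Proof.
move=> hW hinj y Hy.
have Hk : (W :&: lker h = 0)%VS.
  apply/eqP; rewrite -subv0; apply/subvP => x; rewrite memv_cap memv_ker memv0.
  case/andP => Hx /eqP hx0; apply/eqP; apply: hinj => //; first exact: mem0v.
  by rewrite hx0 linear0.
have Hsub : (h @: W <= W)%VS by apply/subvP => z /memv_imgP [x Hx ->]; exact: hW.
have : (h @: W == W)%VS by rewrite eqEdim Hsub (limg_dim_eq Hk) leqnn.
move/eqP => E; have : y \in (h @: W)%VS by rewrite E.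
case/memv_imgP => x Hx ->; by exists x.
Qed.

Variables (phi : V -> 'End(V)) (v : V -> V).
Hypothesis hphi : forall u, u \in U -> forall w, w \in W -> phi u w \in W.

Local Notation f := (f_fam W U phi v).
Local Notation g := (g_fam W U phi v).

Lemma fE w u : w \in W -> u \in U -> f (w + u) = phi u w + f u.
Proof.
move=> Hw Hu; rewrite /f_fam uc_WU // uc_U // linearD /=. by rewrite addrA.
Qed.

Lemma gE x : ucomp W U (f x) = g (ucomp W U x).
Proof.
have Hw := uc_rest x. have Hu := uc_in x.
rewrite -{1}[x](subrK (ucomp W U x)) fE // /g_fam /ucomp linearD /=.
by rewrite -/(ucomp W U _) uc_W ?add0r // hphi.
Qed.

Lemma decomp x : x = (x - ucomp W U x) + ucomp W U x.
Proof. by rewrite subrK. Qed.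

Lemma core : bij_on predT f <->
  (forall u, u \in U -> bij_on [pred x | x \in W] (phi u)) /\
  bij_on [pred x | x \in U] g.
Proof.
split.
- case=> _ finj fsurj.
  have phiinj : forall u, u \in U -> {in W &, injective (phi u)}.
    move=> u Hu w1 w2 H1 H2 E.
    have : f (w1 + u) = f (w2 + u) by rewrite !fE // E.
    by move/finj => /(_ isT isT) /addIr.
  have phisurj : forall u, u \in U -> forall y, y \in W -> exists2 x, x \in W & phi u x = y.
    by move=> u Hu; apply: inj_surj; [exact: hphi | exact: phiinj].
  split.
  + move=> u Hu; split => //; [exact: hphi | exact: phiinj | exact: phisurj].
  + split.
    * by move=> u _; rewrite inE /g_fam uc_in.
    * move=> u1 u2 H1 H2 E.
      have Hd : f u2 - f u1 \in W.
        by apply: uc0_W; rewrite /ucomp linearB /= -!/(ucomp W U _) -/(g_fam W U phi v u2) -/(g_fam W U phi v u1) E subrr.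
      have [w1 Hw1 Ew1] := phisurj u1 H1 _ Hd.
      have : f (w1 + u1) = f u2 by rewrite fE // Ew1 subrK.
      move/finj => /(_ isT isT) Eq.
      by rewrite -(uc_WU _ _ Hw1 H1) Eq uc_U.
    * move=> y Hy; have [x _ Ex] := fsurj y isT.
      exists (ucomp W U x); first by rewrite inE uc_in.
      by rewrite -gE Ex uc_U.
- case=> Hphi [_ ginj gsurj]; split.
  + by [].
  + move=> x1 x2 _ _ E.
    have Eg : g (ucomp W U x1) = g (ucomp W U x2) by rewrite -!gE E.
    have Eu := ginj _ _ (uc_in x1) (uc_in x2) Eg.
    have := E; rewrite (decomp x1) (decomp x2) !fE ?uc_rest ?uc_in // Eu.
    move/addIr; case: (Hphi _ (uc_in x2)) => _ pinj _.
    have H1 : x1 - ucomp W U x2 \in W by rewrite -Eu uc_rest.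
    by move/pinj => /(_ H1 (uc_rest _)) ->.
  + move=> y _.
    have [u Hu Eu] := gsurj _ (uc_in y).
    have Hd : y - f u \in W.
      apply: uc0_W; rewrite /ucomp linearB /= -!/(ucomp W U _) -/(g_fam W U phi v u) Eu subrr //.
    case: (Hphi _ Hu) => _ _ psurj.
    have [w Hw Ew] := psurj _ Hd.
    by exists (w + u) => //; rewrite fE // Ew subrK.
Qed.

End Core.
Lemma bijE (T : choiceType) (h : T -> T) : bijective h <-> bij_on predT h.
Proof.
split.
- case=> k hk kh; split => //; first by move=> x y _ _; exact: (can_inj hk).
  by move=> y _; exists (k y).
- case=> _ hinj hsurj.
  have ex : forall y, exists x, h x == y.
    by move=> y; have [x _ <-] := hsurj y isT; exists x.
  exists (fun y => xchoose (ex y)).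
  + move=> x; apply: hinj => //; exact/eqP/(xchooseP (ex (h x))).
  + move=> y; exact/eqP/(xchooseP (ex y)).
Qed.
Lemma bij_on_ext (T : eqType) (A : pred T) (h1 h2 : T -> T) :
  {in A, h1 =1 h2} -> bij_on A h1 -> bij_on A h2.
Proof.
move=> E [h1A h1i h1s]; split.
- by move=> x Hx; rewrite -E // h1A.
- by move=> x y Hx Hy; rewrite -!E //; exact: h1i.
- by move=> y Hy; have [x Hx <-] := h1s y Hy; exists x => //; rewrite E.
Qed.

Arguments bij_on_ext {T A h1 h2}.

Theorem proposition4p1 (K : fieldType) (V : vectType K) (W U : {vspace V})
    (phi : V -> 'End(V)) (v : V -> V) :
  (W :&: U = 0)%VS -> (W + U = fullv)%VS ->
  (forall u, u \in U -> forall w, w \in W -> phi u w \in W) ->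
  (bijective (f_fam W U phi v) <->
     (forall u, u \in U -> bij_on [pred x | x \in W] (phi u)) /\
     bij_on [pred x | x \in U] (g_fam W U phi v)) /\
  (complete_on predT (f_fam W U phi v) <->
     (forall u, u \in U -> complete_on [pred x | x \in W] (phi u)) /\
     complete_on [pred x | x \in U] (g_fam W U phi v)).
Proof.
move=> hcap hsum hphi.
pose phi' := fun u => (phi u + \1)%VF.
have hphi' : forall u, u \in U -> forall w, w \in W -> phi' u w \in W.
  by move=> u Hu w Hw; rewrite /phi' add_lfunE id_lfunE rpredD // hphi.
have Ef : forall x, f_fam W U phi' v x = f_fam W U phi v x + x.
  by move=> x; rewrite /f_fam /phi' add_lfunE id_lfunE addrAC.
have Eg : {in [pred x | x \in U], g_fam W U phi v =1 (fun x => g_fam W U phi' v x - x)}.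
  move=> u Hu; rewrite /g_fam Ef; set a := f_fam W U phi v u.
  rewrite {2}/ucomp linearD /=.
  have := @uc_U _ _ W U hcap u Hu; rewrite /ucomp => ->; by rewrite addrK.
have Eg' : {in [pred x | x \in U], g_fam W U phi' v =1 (fun x => g_fam W U phi v x + x)}.
  by move=> u Hu; rewrite Eg // subrK.
have Ep : forall u, {in [pred x | x \in W], phi' u =1 (fun x => phi u x + x)}.
  by move=> u x _; rewrite /phi' add_lfunE id_lfunE.
have Ep' : forall u, {in [pred x | x \in W], (fun x => phi u x + x) =1 phi' u}.
  by move=> u x Hx; rewrite Ep.
have C1 := @core _ _ W U hcap hsum _ v hphi; have C2 := @core _ _ W U hcap hsum _ v hphi'.
split.
- by split => [/bijE/C1 | /C1/bijE].
- split.
  + case=> B1 B2; have [P1 G1] := C1.1 B1.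
    have B2' : bij_on predT (f_fam W U phi' v) by apply: bij_on_ext B2 => x _; rewrite Ef.
    have [P2 G2] := C2.1 B2'.
    split; last by split => //; apply: (bij_on_ext _ G2) => x Hx; exact: Eg'.
    by move=> u Hu; split; [exact: P1 | exact: (bij_on_ext (Ep u) (P2 u Hu))].
  + case=> P [G1 G2].
    have B1 := C1.2 (conj (fun u Hu => (P u Hu).1) G1).
    have B2 := C2.2 (conj (fun u Hu => bij_on_ext (Ep' u) (P u Hu).2) (bij_on_ext (fun x Hx => esym (Eg' x Hx)) G2)).
    split => //; apply: bij_on_ext B2 => x _; exact: Ef.
Qed.
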